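(* Let $q$ be a prime power and let $1\le t_1<\cdots<t_r<n$ be divisors of $n$ such that $t_i$ divides $t_{i+1}$ for $1\le i\le r-1$. Let $\mathcal{F}=(\mathbb{F}_{q^{t_1}},\ldots,\mathbb{F}_{q^{t_r}})$ be the Galois flag of this type on $\mathbb{F}_{q^n}$ and let $\beta\in\mathbb{F}_{q^n}^*$. For each $1\le i\le r$, let $\beta_i$ be a generator of the cyclic group $\langle\beta\rangle\cap\mathbb{F}_{q^{t_i}}^*$ (which equals the stabilizer of $\mathbb{F}_{q^{t_i}}$ in $\langle\beta\rangle$). Then: (1) for each $1\le i\le r$, $\mathrm{Orb}_\beta(\mathbb{F}_{q^{t_i}})$ is a partial spread of dimension $t_i$ of $\mathbb{F}_{q^n}$; (2) for every $1\le i<j\le r$ and every $0\le l\le|\beta_j|-1$, the $\beta_j$-cyclic orbit code $\mathrm{Orb}_{\beta_j}(\mathbb{F}_{q^{t_i}}\beta^l)$ is a partial spread of dimension $t_i$ of the subspace $\mathbb{F}_{q^{t_j}}\beta^l$.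
   Context: $\mathbb{F}_{q^n}$ is regarded as an $\mathbb{F}_q$-vector space. For $\gamma\in\mathbb{F}_{q^n}^*$ and an $\mathbb{F}_q$-subspace $\mathcal{U}$, $\mathcal{U}\gamma=\{u\gamma:u\in\mathcal{U}\}$. For $\beta\in\mathbb{F}_{q^n}^*$ of multiplicative order $|\beta|$, $\mathrm{Orb}_\beta(\mathcal{U})=\{\mathcal{U}\beta^j:0\le j\le|\beta|-1\}$. A partial spread of dimension $t$ of an $\mathbb{F}_q$-subspace $\mathcal{W}$ is a set of $t$-dimensional $\mathbb{F}_q$-subspaces of $\mathcal{W}$ that pairwise intersect in $\{0\}$. *)

(* Defs.v *)
From HB Require Import structures.
From mathcomp Require Import all_boot all_algebra all_field.
Set Implicit Arguments. Unset Strict Implicit. Unset Printing Implicit Defensive.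
Import GRing.Theory.
Local Open Scope ring_scope.

Section Defs.
Variables (F : finFieldType) (L : fieldExtType F).

Definition vsmul (U : {vspace L}) (g : L) : {vspace L} := (amulr g @: U)%VS.

Definition is_mult_order (x : L) (N : nat) : Prop :=
  (0 < N)%N /\ x ^+ N = 1 /\ (forall m, (0 < m < N)%N -> x ^+ m != 1).

Definition Orb (b : L) (N : nat) (U : {vspace L}) : {vspace L} -> Prop :=
  fun V => exists2 j : nat, (j < N)%N & V = vsmul U (b ^+ j).

Definition partial_spread (W : {vspace L}) (t : nat) (S : {vspace L} -> Prop) : Prop :=
  (forall U, S U -> (U <= W)%VS /\ \dim U = t) /\
  (forall U V, S U -> S V -> U != V -> (U :&: V)%VS = 0%VS).
End Defs.

(* Main.v *)
Require Import Defs.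
From HB Require Import structures.
From mathcomp Require Import all_boot all_algebra all_field.
Local Open Scope ring_scope.
Import GRing.Theory.

Section Helpers.
Variables (F : finFieldType) (L : fieldExtType F).

Lemma amulrE' (g x : L) : amulr g x = x * g.
Proof. by rewrite lfunE. Qed.

Lemma mem_vsmulP (U : {vspace L}) g x :
  reflect (exists2 u, u \in U & x = u * g) (x \in vsmul U g).
Proof.
apply: (iffP memv_imgP) => -[u Uu ->]; exists u => //; by rewrite amulrE'.
Qed.

Lemma vsmulA (U : {vspace L}) a b : vsmul (vsmul U a) b = vsmul U (a * b).
Proof.
apply/vspaceP => x; apply/mem_vsmulP/mem_vsmulP.
  by move=> [y /mem_vsmulP [u Uu ->] ->]; exists u; rewrite // mulrA.
by move=> [u Uu ->]; exists (u * a); [apply/mem_vsmulP; exists u | rewrite mulrA].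
Qed.

Lemma dim_vsmul (U : {vspace L}) g : g != 0 -> \dim (vsmul U g) = \dim U.
Proof.
move=> gnz; apply: limg_dim_eq.
have /eqP -> : lker (amulr g) == 0%VS.
  by apply/lker0P => x y; rewrite !amulrE'; apply: mulIf.
by rewrite capv0.
Qed.

Lemma vsmul_subS (U V : {vspace L}) g : (U <= V)%VS -> (vsmul U g <= vsmul V g)%VS.
Proof. exact: limgS. Qed.

Lemma vsmul_absorb (K : {aspace L}) c g : c \in K -> c != 0 ->
  vsmul K (c * g) = vsmul K g.
Proof.
move=> Kc cnz; apply/vspaceP => x; apply/mem_vsmulP/mem_vsmulP.
  by move=> [u Ku ->]; exists (u * c); rewrite ?rpredM // mulrA.
move=> [u Ku ->]; exists (u / c); first by rewrite rpred_div.
by rewrite mulrA divfK.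
Qed.

Lemma vsmul_disj (K : {aspace L}) a b : vsmul K a != vsmul K b ->
  (vsmul K a :&: vsmul K b = 0)%VS.
Proof.
move=> neq; apply/eqP; apply: contraR neq => nz.
have := memv_pick (vsmul K a :&: vsmul K b)%VS.
have : vpick (vsmul K a :&: vsmul K b)%VS != 0 by rewrite vpick0.
set x := vpick _ => xnz /memv_capP [/mem_vsmulP [u Ku xu] /mem_vsmulP [v Kv xv]].
have unz : u != 0 by apply: contraNneq xnz => u0; rewrite xu u0 mul0r.
have vnz : v != 0 by apply: contraNneq xnz => v0; rewrite xv v0 mul0r.
have -> : a = (v / u) * b.
  by apply: (mulfI unz); rewrite mulrA mulrCA divff // mulr1 -xu xv.
rewrite vsmul_absorb // ?rpred_div //.
by rewrite mulf_neq0 // invr_eq0.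
Qed.

Lemma subfield_sub (K1 K2 : {aspace L}) :
  (\dim K1 %| \dim K2)%N -> (K1 <= K2)%VS.
Proof.
move=> /dvdnP [m Hm]; apply/subvP => x Kx.
rewrite Fermat's_little_theorem; move: Kx; rewrite Fermat's_little_theorem => /eqP Hx.
rewrite Hm mulnC expnM; apply/eqP; clear Hm.
elim: m => [|m IH]; first by rewrite expn0 expr1.
by rewrite expnSr exprM IH.
Qed.

End Helpers.

Lemma chain_dvd (t : nat -> nat) r :
  (forall i, (i.+1 < r)%N -> (t i < t i.+1)%N /\ (t i %| t i.+1)%N) ->
  forall i j, (i < j)%N -> (j < r)%N -> (t i %| t j)%N.
Proof.
move=> Hchain i j; elim: j => [//|j IH].
rewrite ltnS leq_eqVlt => /orP [/eqP -> jr|ij jr]; first exact: (Hchain j jr).2.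
apply: dvdn_trans (IH ij (ltnW jr)) _; exact: (Hchain j jr).2.
Qed.

Theorem corollary4p13 (F : finFieldType) (L : fieldExtType F) (q n r : nat)
  (t : nat -> nat) (E : nat -> {aspace L}) (beta : L) (bs : nat -> L) :
  #|F| = q ->
  n = \dim {: L}%VS ->
  (0 < r)%N ->
  (1 <= t 0)%N ->
  (forall i, (i.+1 < r)%N -> (t i < t i.+1)%N /\ (t i %| t i.+1)%N) ->
  (t r.-1 < n)%N ->
  (forall i, (i < r)%N -> (t i %| n)%N) ->
  (* E i is the subfield F_{q^{t i}} of L (the unique one of dimension t i over F_q) *)
  (forall i, (i < r)%N -> \dim (E i) = t i) ->
  beta != 0 ->
  (* bs i generates the cyclic group <beta> \cap F_{q^{t i}}^* *)
  (forall i, (i < r)%N -> forall x : L,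
      (x \in E i /\ x != 0 /\ exists k : nat, x = beta ^+ k) <->
      (exists k : nat, x = bs i ^+ k)) ->
  (forall i, (i < r)%N -> forall N, is_mult_order beta N ->
      partial_spread {: L}%VS (t i) (Orb beta N (E i))) /\
  (forall i j, (i < j)%N -> (j < r)%N -> forall Nj, is_mult_order (bs j) Nj ->
      forall l : nat, (l < Nj)%N ->
      partial_spread (vsmul (E j) (beta ^+ l)) (t i)
                     (Orb (bs j) Nj (vsmul (E i) (beta ^+ l)))).
Proof.
move=> _ _ _ _ Hchain _ _ Hdim bnz Hbs; split.
  move=> i ir N _; split.
    move=> U [k _ ->]; split; first exact: subvf.
    by rewrite dim_vsmul ?Hdim // expf_neq0.
  by move=> U V [a _ ->] [b _ ->]; apply: vsmul_disj.
move=> i j ij jr Nj _ l _.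
have [bsE [bsnz _]] : bs j \in E j /\ bs j != 0 /\ exists k : nat, bs j = beta ^+ k.
  by apply/(Hbs j jr); exists 1%N; rewrite expr1.
have Hsub : (E i <= E j)%VS.
  apply: subfield_sub; rewrite !Hdim ?(ltn_trans ij) //.
  exact: (@chain_dvd t r Hchain i j ij jr).
split.
  move=> U [k _ ->]; rewrite vsmulA; split.
    rewrite -(@vsmul_absorb _ _ (E j) (bs j ^+ k) (beta ^+ l)) ?rpredX ?expf_neq0 //.
    by rewrite mulrC; apply: vsmul_subS.
  by rewrite dim_vsmul ?Hdim ?(ltn_trans ij) // mulf_neq0 // expf_neq0.
by move=> U V [a _ ->] [b _ ->]; rewrite !vsmulA; apply: vsmul_disj.
Qed.
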